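(* Let $d\ge 2$. For $B\ge 1$ let $P_1(d,B)$ be the set of monic polynomials of degree $d$ with integer coefficients, all bounded in absolute value by $B$, and with constant coefficient $1$; let $R_1(d,B)\subseteq P_1(d,B)$ be the subset of those polynomials that are reducible over $\mathbb{Z}$. Then the coefficient vectors $(a_1,\dots,a_{d-1})$ of the polynomials in $R_1(d,B)$ (for all $B$) lie on an algebraic hypersurface of $\mathbb{C}^{d-1}$, and consequently \[\frac{|R_1(d,B)|}{|P_1(d,B)|}=O\!\left(\frac1B\right)\quad (B\to\infty).\] *)

(* Defs.v *)
From HB Require Import structures.
From mathcomp Require Import all_boot all_order all_algebra all_field.
From mathcomp Require Import mpoly.
From Stdlib Require Import ClassicalDescription.

Set Implicit Arguments.
Unset Strict Implicit.
Unset Printing Implicit Defensive.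

Import Order.TTheory GRing.Theory Num.Theory.
Local Open Scope ring_scope.

Definition reducibleZ (p : {poly int}) : Prop :=
  p != 0 /\ p \isn't a GRing.unit /\
  exists q r : {poly int}, p = q * r /\ q \isn't a GRing.unit /\
                           r \isn't a GRing.unit.

Definition reducibleZb (p : {poly int}) : bool :=
  if excluded_middle_informative (reducibleZ p) then true else false.

(* x^d + a_{d-1} x^{d-1} + ... + a_1 x + 1, with a : 'I_(d-1) -> int,
   a i being the coefficient a_{i+1} of x^{i+1}. *)
Definition polyOf (d : nat) (a : 'I_(d.-1) -> int) : {poly int} :=
  'X^d + \sum_(i < d.-1) (a i)%:P * 'X^(i.+1) + 1.

Definition centered (B : nat) (i : 'I_(2 * B).+1) : int := (i : int) - (B : int).

Definition P1 (d B : nat) : seq {poly int} :=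
  undup [seq polyOf (fun i => centered (f i)) | f : {ffun 'I_(d.-1) -> 'I_(2 * B).+1}].

Definition R1 (d B : nat) : seq {poly int} := [seq p <- P1 d B | reducibleZb p].

(* Main.v *)
Require Import Defs.
From HB Require Import structures.
From mathcomp Require Import all_boot all_order all_algebra all_field.
From mathcomp Require Import mpoly.
From mathcomp Require Import zify ring lra.
From mathcomp Require Import fingroup perm.
From Stdlib Require Import ClassicalDescription.
Import Order.TTheory GRing.Theory Num.Theory.
Local Open Scope ring_scope.
Set Implicit Arguments.
Unset Strict Implicit.
Local Notation widen := (widen_ord (leqnSn _)).
Section MuniFacts.
Variable n : nat.
Implicit Types p : {mpoly algC[n.+1]}.

Definition mres (m : 'X_{1..n.+1}) : 'X_{1..n} := [multinom m (widen j) | j < n].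

Lemma coef_muni p i :
  (muni p)`_i = \sum_(m <- msupp p | m ord_max == i) p@_m *: 'X_[mres m].
Proof. by rewrite muniE coef_sumMXn; apply: eq_bigl => m. Qed.

Lemma mdeg_mres m : (mdeg (mres m) + m ord_max = mdeg m)%N.
Proof.
rewrite !mdegE big_ord_recr /=; congr (_ + _)%N; apply: eq_bigr => j _.
by rewrite mnmE.
Qed.

Lemma msize_coef_muni p i : (msize ((muni p)`_i) <= msize p)%N.
Proof.
rewrite coef_muni (leq_trans (msize_sum _ _ _)) //.
apply/bigmax_leqP_seq => m mp _.
rewrite (leq_trans (mmeasureZ_le _ _ _)) // msizeX.
have := msize_mdeg_lt mp; rewrite -mdeg_mres; apply: leq_ltn_trans.
exact: leq_addr.
Qed.

Lemma size_muni p : (size (muni p) <= msize p)%N.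
Proof.
apply/leq_sizeP => i hi; rewrite coef_muni big_seq_cond big1 // => m /andP[mp /eqP mi].
have := msize_mdeg_lt mp; rewrite -mdeg_mres mi => h.
have : (msize p < msize p)%N.
  by apply: leq_ltn_trans h; apply: leq_trans hi (leq_addl _ _).
by rewrite ltnn.
Qed.

Lemma muni_eq0 p : (muni p == 0) = (p == 0).
Proof.
apply/idP/idP => [/eqP u0|/eqP ->]; last by rewrite muni0.
apply/eqP/mpolyP => m; rewrite mcoeff0.
have [mp|] := boolP (m \in msupp p); last by rewrite mcoeff_msupp negbK => /eqP.
have := congr1 (fun q : {poly {mpoly algC[n]}} => (q`_(m ord_max))@_(mres m)) u0.
rewrite coef0 mcoeff0 coef_muni raddf_sum /= big_mkcond (bigD1_seq m) ?msupp_uniq //=.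
rewrite eqxx mcoeffZ mcoeffX eqxx mulr1 big1_seq ?addr0 // => m' /andP[ne _].
case: eqP => [e|] //=.
rewrite mcoeffZ mcoeffX; case: eqP; rewrite ?mulr0 // => /mnmP h.
move/negP: ne; case; apply/eqP/mnmP => j.
case: (unliftP ord_max j) => [j'|] ->; last by rewrite e.
have := h j'; rewrite !mnmE.
have -> : lift ord_max j' = widen j' by apply: val_inj; rewrite /= /bump leqNgt ltn_ord.
by [].
Qed.
End MuniFacts.
Lemma meval_muni n (p : {mpoly algC[n.+1]}) (v : 'I_n.+1 -> algC) :
  p.@[v] = (map_poly (meval (fun i : 'I_n => v (widen i))) (muni p)).[v ord_max].
Proof.
rewrite muniE mevalE raddf_sum horner_sum; apply: eq_bigr => m _ /=.
rewrite map_polyZ /= map_polyXn hornerZ hornerXn mevalZ mevalX big_ord_recr /=.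
rewrite mulrA; congr (_ * _ * _); apply: eq_bigr => i _; by rewrite mnmE.
Qed.

Section SZ.
Variable s : nat.
Variable g : 'I_s -> algC.
Hypothesis g_inj : injective g.

Definition Zset n (p : {mpoly algC[n]}) :=
  [set f : {ffun 'I_n -> 'I_s} | p.@[fun i => g (f i)] == 0].

Lemma SZ0 (p : {mpoly algC[0]}) : p != 0 -> #|Zset p| = 0%N.
Proof.
move=> p0; apply/eqP; rewrite cards_eq0; apply/eqP/setP => f; rewrite !inE.
have pE : p = (p@_0%MM)%:MP.
  apply/mpolyP => m; rewrite mcoeffC.
  have -> : m = 0%MM by apply/mnmP => -[].
  by rewrite eqxx mulr1.
rewrite pE mevalC; apply/negbTE; move: p0; rewrite {1}pE.
by apply: contra => /eqP ->; rewrite raddf0.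
Qed.

Lemma SZ n (p : {mpoly algC[n]}) : p != 0 ->
  (#|Zset p| * s <= n * msize p * s ^ n)%N.
Proof.
elim: n p => [|n IH] p p0; first by rewrite SZ0.
set u := muni p.
have u0 : u != 0 by rewrite muni_eq0.
set k := (size u).-1.
set lc := u`_k.
have lc0 : lc != 0 by rewrite /lc /k -lead_coefE lead_coef_eq0.
have hlc := IH lc lc0.
have slc : (msize lc <= msize p)%N by apply: msize_coef_muni.
have su : (size u <= msize p)%N by apply: size_muni.
pose r (f : {ffun 'I_n.+1 -> 'I_s}) : {ffun 'I_n -> 'I_s} := [ffun j : 'I_n => f (widen j)].
have key : (#|Zset p| <= #|Zset lc| * s + s ^ n * k)%N.
  rewrite -sum1_card (partition_big r xpredT) //=.
  apply: (@leq_trans (\sum_(f' : {ffun 'I_n -> 'I_s}) ((if f' \in Zset lc then s else 0) + k))%N).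
    apply: leq_sum => f' _.
    rewrite sum1dep_card.
    set A := [set f | _].
    have hinj : {in A &, injective (fun f : {ffun 'I_n.+1 -> 'I_s} => f ord_max)}.
      move=> f1 f2; rewrite !inE => /andP[_ /eqP e1] /andP[_ /eqP e2] e.
      apply/ffunP => j; case: (unliftP ord_max j) => [j'|] ->; last by [].
      have -> : lift ord_max j' = widen j' by apply: val_inj; rewrite /= /bump leqNgt ltn_ord.
      have := congr1 (fun F : {ffun 'I_n -> 'I_s} => F j') (etrans e1 (esym e2)); rewrite /r !ffunE. by [].
    rewrite -(card_in_imset hinj).
    case: ifP => hf'; first by rewrite (leq_trans (max_card _)) // card_ord leq_addr.
    rewrite add0n.
    pose q := map_poly (meval (fun i => g (f' i))) u.
    have hq : (meval (fun i => g (f' i))) (lead_coef u) != 0.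
      by move: hf'; rewrite inE lead_coefE -/k -/lc => /negbT.
    have sq : size q = size u by rewrite size_map_poly_id0.
    have q0 : q != 0 by rewrite -size_poly_eq0 sq size_poly_eq0.
    set I := [set _ | _ in A].
    have Hall : all (root q) (map g (enum I)).
      apply/allP => y /mapP [x]; rewrite mem_enum => /imsetP [f].
      rewrite inE => /andP[]; rewrite inE => /eqP hp /eqP hr -> ->.
      rewrite /root -hp meval_muni -/u; apply/eqP; congr (horner _ _).
      apply: eq_map_poly => z; apply: meval_eq => i /=.
      by rewrite -hr /r ffunE.
    have Hu : uniq (map g (enum I)) by rewrite map_inj_uniq // enum_uniq.
    have := max_poly_roots q0 Hall Hu.
    rewrite size_map -cardE sq.
    by rewrite /k; case: (size u).
  rewrite big_split /= -big_mkcond sum_nat_const sum_nat_const card_ffun !card_ord.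
  by [].
rewrite expnS.
have hk : (k <= msize p)%N by rewrite /k (leq_trans (leq_pred _)).
have h1 : (#|Zset p| * s <= (#|Zset lc| * s + s ^ n * k) * s)%N by rewrite leq_mul2r key orbT.
have h2 : (#|Zset lc| * s * s <= n * msize p * s ^ n * s)%N.
  rewrite leq_mul2r (leq_trans hlc) ?orbT //.
  by rewrite leq_mul2r leq_mul2l slc !orbT.
have h3 : (s ^ n * k * s <= s ^ n * msize p * s)%N by rewrite leq_mul2r leq_mul2l hk !orbT.
nia.
Qed.
End SZ.
Section Part1.
Variable m : nat.
Local Notation d := m.+1.

Definition Pp : {mpoly algC[d]} :=
  \prod_(S : {set 'I_d} | (S != set0) && (S != setT)) ((\prod_(i in S) 'X_i)^+2 - 1).

Lemma meval_Pp (x : 'I_d -> algC) :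
  Pp.@[x] = \prod_(S : {set 'I_d} | (S != set0) && (S != setT)) ((\prod_(i in S) x i)^+2 - 1).
Proof.
rewrite /Pp rmorph_prod /=; apply: eq_bigr => S _.
by rewrite rmorphB rmorphXn rmorph1 rmorph_prod /=; congr (_ ^+ 2 - 1); apply: eq_bigr => i _; rewrite mevalXU.
Qed.

Lemma msymXU (s : 'S_d) (i : 'I_d) : msym s ('X_i : {mpoly algC[d]}) = 'X_(s i).
Proof. by rewrite /msym mmapX mmap1U. Qed.

Lemma Pp_sym : Pp \is symmetric.
Proof.
apply/issymP => s.
rewrite /Pp rmorph_prod /=.
rewrite [RHS](reindex_inj (h := fun S : {set 'I_d} => [set s x | x in S])); last exact/imset_inj/perm_inj.
apply: eq_big => S.
  rewrite imset_eq0; congr (_ && _).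
  rewrite !eqEcard !subsetT !cardsT card_imset //; exact: perm_inj.
move=> _; rewrite rmorphB rmorphXn rmorph1 rmorph_prod /=.
rewrite big_imset /=; last by move=> x y _ _; apply: perm_inj.
by congr (_ ^+ 2 - 1); apply: eq_bigr => i _; rewrite msymXU.
Qed.

Definition cq (k : 'I_d) : {mpoly algC[m]} :=
  (-1) ^+ k.+1 * (if (k.+1 < d)%N then (if insub (m - k.+1)%N is Some j then 'X_j else 0) else 1).

Definition lq : d.-tuple {mpoly algC[m]} := [tuple cq k | k < d].

Definition tP : {mpoly algC[d]} := sval (sym_fundamental Pp_sym).

Definition Fp : {mpoly algC[m]} := tP \mPo lq.

Lemma eval_Fp (cs : d.-tuple algC) :
  let pa := \prod_(c <- cs) ('X - c%:P) in
  pa`_0 = 1 -> Fp.@[fun i => pa`_(i.+1)] = Pp.@[tnth cs].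
Proof.
move=> pa pa0.
have [tE _] := svalP (sym_fundamental Pp_sym).
rewrite -[in RHS]tE /Fp !comp_mpoly_meval -/tP.
apply: meval_eq => k; rewrite !tnth_map !tnth_ord_tuple.
have := mroots_coeff cs (lift ord0 k); rewrite /= -/pa => hc.
have -> : (@mesym d _ k.+1).@[tnth cs] = (-1) ^+ k.+1 * pa`_(d - k.+1).
  by rewrite hc signrMK.
rewrite /cq mevalM rmorphXn rmorphN rmorph1 /=; congr (_ * _).
case: ltnP => hk.
  case: insubP => [j _ hj|]; last by move/negP; case; lia.
  rewrite (mevalXU (fun i : 'I_m => pa`_i.+1) j) hj. congr (pa`_ _). lia.
have -> : k.+1 = d by apply/eqP; rewrite eqn_leq hk ltn_ord.
by rewrite subnn rmorph1.
Qed.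

Definition xw (i : 'I_d) : algC := if (i < m)%N then -2 else - ((2 ^+ m)^-1).

Lemma sq4 j : ((-2 : algC) ^+ j) ^+ 2 = (4 ^ j)%:R.
Proof. by rewrite exprAC sqrrN -natrX -natrX. Qed.

Lemma witness : exists cs : d.-tuple algC,
  (\prod_(c <- cs) ('X - c%:P))`_0 = 1 /\ Pp.@[tnth cs] != 0.
Proof.
have a0 : (2 ^+ m : algC) != 0 by rewrite expf_neq0 // pnatr_eq0.
exists [tuple xw i | i < d]; split.
  rewrite -horner_coef0 horner_prod big_tuple big_ord_recr /=.
  rewrite (eq_bigr (fun _ => 2)); last first.
    by move=> i _; rewrite tnth_mktuple hornerXsubC /xw /= ltn_ord sub0r opprK.
  rewrite prodr_const card_ord tnth_mktuple hornerXsubC /xw /= ltnn sub0r opprK.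
  by rewrite divff.
rewrite meval_Pp; apply/prodf_eq0 => -[S /andP[S0 ST]].
rewrite subr_eq0 => /eqP.
have x2 i : i != ord_max -> tnth [tuple xw i | i < d] i = -2.
  move=> ne; rewrite tnth_mktuple /xw ifT //.
  by rewrite ltn_neqAle -ltnS ltn_ord andbT; move: ne; apply: contra => /eqP h; apply/eqP/val_inj.
have [Smax|Smax] := boolP (ord_max \in S).
  rewrite (bigD1 ord_max) //= (eq_bigr (fun _ => -2)); last by move=> i /andP[_]; apply: x2.
  rewrite prodr_const tnth_mktuple /xw ltnn exprMn sqrrN sq4 exprVn -exprM mulnC exprM -natrX -natrX.
  set j := #|_|.
  have hj : (j < m)%N.
    have : (#|S| < d)%N.
      have := max_card (mem S); rewrite card_ord leq_eqVlt => /orP[/eqP h|//].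
      by move: ST; rewrite eqEcard subsetT cardsT card_ord h leqnn.
    have -> : j = #|[predD1 S & ord_max]| by apply: eq_card => i; rewrite !inE andbC.
    by rewrite (cardD1 ord_max) Smax add1n ltnS.
  have -> : (2 ^ 2)%N = 4%N by [].
  rewrite mulrC => /(congr1 (fun z => z * (4 ^ m)%:R)); rewrite divfK ?mul1r; last by rewrite pnatr_eq0 expn_eq0.
  move/eqP; rewrite eqr_nat eqn_exp2l // => /eqP hjm; move: hj; rewrite hjm ltnn.
  by [].
rewrite (eq_bigr (fun _ => -2)); last by move=> i iS; apply: x2; apply: contraNneq Smax => <-.
rewrite prodr_const sq4 => /eqP; rewrite pnatr_eq1.
rewrite -(expn0 4) eqn_exp2l // => /eqP h.
by move: S0; rewrite -card_gt0 h ltnn.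
Qed.

Lemma Fp_neq0 : Fp != 0.
Proof.
have [cs [h0 hP]] := witness.
apply: contra hP => /eqP F0; rewrite -eval_Fp // F0 raddf0.
by [].
Qed.

Lemma split_monic (q : {poly int}) : lead_coef q = 1 ->
  exists rq : seq algC, map_poly intr q = \prod_(z <- rq) ('X - z%:P) /\ size rq = (size q).-1.
Proof.
move=> lq.
have [rq Hq] := closed_field_poly_normal (map_poly (intr : int -> algC) q).
have lqC : lead_coef (map_poly (intr : int -> algC) q) = 1.
  by rewrite (lead_coef_map_inj (@intr_inj _)) ?lq ?rmorph0.
rewrite lqC scale1r in Hq; exists rq; split => //.
have := congr1 (fun x : {poly algC} => size x) Hq; rewrite size_prod_XsubC (size_map_inj_poly (@intr_inj _)) ?rmorph0 //.
by move=> ->.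
Qed.

Lemma unit_int (x y : int) : x * y = 1 -> x = 1 \/ x = -1.
Proof.
rewrite mulrC => /intUnitRing.unitzPl; rewrite /intUnitRing.unitz qualifE /=.
by case/orP => /eqP ->; [left|right].
Qed.

Lemma normalize_fact (p : {poly int}) : lead_coef p = 1 -> p`_0 = 1 -> reducibleZ p ->
  exists q r : {poly int}, p = q * r /\ q \isn't a GRing.unit /\ r \isn't a GRing.unit
    /\ lead_coef q = 1 /\ lead_coef r = 1 /\ q`_0 ^+ 2 = 1.
Proof.
move=> lp p0 [_ [_ [q [r [pqr [qu ru]]]]]].
have hl : lead_coef q * lead_coef r = 1 by rewrite -lead_coefM -pqr.
have h0 : q`_0 * r`_0 = 1 by rewrite -coef0M -pqr.
have sq0 : q`_0 ^+ 2 = 1 by case: (unit_int h0) => ->; rewrite ?expr1n ?sqrrN ?expr1n.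
case: (unit_int hl) => hq.
  exists q, r; do !split => //; by rewrite hq mul1r in hl.
exists (- q), (- r); rewrite mulrNN; do !split => //.
- by rewrite unitrN.
- by rewrite unitrN.
- by rewrite lead_coefN hq opprK.
- by rewrite lead_coefN; move: hl; rewrite hq mulN1r => /eqP; rewrite eqr_oppLR => /eqP ->.
- by rewrite coefN sqrrN.
Qed.

Lemma monic_big (q : {poly int}) : lead_coef q = 1 -> q \isn't a GRing.unit -> (1 < size q)%N.
Proof.
move=> lq qu; rewrite ltnNge; apply/negP => hs.
have e := size1_polyC hs.
have c1 : q`_0 = 1 by rewrite -lq {2}e lead_coefC.
by move: qu; rewrite e c1 polyC1 unitr1.
Qed.

Lemma Fp_van (p : {poly int}) : size p = d.+1 -> lead_coef p = 1 -> p`_0 = 1 -> reducibleZ p ->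
  Fp.@[fun i => (p`_(i.+1))%:~R] = 0.
Proof.
move=> sp lp p0 hred.
have [q [r [pqr [qu [ru [lq [lr q0]]]]]]] := normalize_fact lp p0 hred.
have sq := monic_big lq qu.
have sr := monic_big lr ru.
have [rq [Hq srq]] := split_monic lq.
have [rr [Hr srr]] := split_monic lr.
have HpC : map_poly (intr : int -> algC) p = \prod_(z <- rq ++ rr) ('X - z%:P).
  by rewrite pqr rmorphM /= Hq Hr big_cat.
have hs : size (rq ++ rr) == d.
  have := congr1 (fun x : {poly algC} => size x) HpC.
  by rewrite size_prod_XsubC (size_map_inj_poly (@intr_inj _)) ?rmorph0 // sp => -[->].
pose cs := Tuple hs.
have E : Fp.@[fun i => (p`_(i.+1))%:~R] = Fp.@[fun i => (\prod_(c <- cs) ('X - c%:P))`_(i.+1)].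
  by apply: meval_eq => i; rewrite /= -HpC coef_map.
rewrite E eval_Fp; last by rewrite /= -HpC coef_map p0.
rewrite meval_Pp; apply/eqP/prodf_eq0.
have lrq : (0 < size rq)%N by rewrite srq -ltnS prednK // ltnW.
have lrr : (0 < size rr)%N by rewrite srr -ltnS prednK // ltnW.
have hsz : (size rq + size rr = d)%N by rewrite -size_cat (eqP hs).
exists [set i : 'I_d | (i < size rq)%N].
  apply/andP; split.
    by apply/set0Pn; exists ord0; rewrite inE.
  apply/negP => /eqP hT.
  have : ord_max \in [set i : 'I_d | (i < size rq)%N] by rewrite hT inE.
  by rewrite inE /=; lia.
have -> : \prod_(i in [set i : 'I_d | (i < size rq)%N]) tnth cs i = \prod_(z <- rq) z.
  rewrite [RHS](big_nth 0) big_mkord (@big_ord_widen _ _ _ _ d (fun i => nth 0 rq i)); last by rewrite -hsz leq_addr.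
  apply: eq_big => i; first by rewrite inE.
  by rewrite inE => hi; rewrite (tnth_nth 0) /= nth_cat hi.
rewrite subr_eq0 -prodrXl (eq_bigr (fun z => (0 - z) ^+ 2)); last by move=> z _; rewrite sub0r sqrrN.
rewrite prodrXl.
have -> : \prod_(z <- rq) (0 - z) = (map_poly (intr : int -> algC) q)`_0.
  by rewrite -horner_coef0 Hq horner_prod; apply: eq_bigr => z _; rewrite hornerXsubC.
rewrite coef_map /=.
by rewrite -rmorphXn q0 rmorph1.
Qed.
End Part1.

Section PolyOf.
Variable m : nat.
Variable a : 'I_m -> int.

Lemma coef_sumX j : (\sum_(i < m) (a i)%:P * 'X^(i.+1))`_j = \sum_(i < m | i.+1 == j) a i.
Proof.
rewrite coef_sum [RHS]big_mkcond; apply: eq_bigr => i _.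
by rewrite coefCM coefXn eq_sym; case: eqP; rewrite ?mulr1 ?mulr0.
Qed.

Lemma polyOf_coef j : (@polyOf m.+1 a)`_j =
  (j == m.+1)%:R + \sum_(i < m | i.+1 == j) a i + (j == 0)%:R.
Proof. by rewrite /polyOf !coefD coefXn coef_sumX coef1. Qed.

Lemma polyOf0 : (@polyOf m.+1 a)`_0 = 1.
Proof. by rewrite polyOf_coef big_pred0 // add0r. Qed.

Lemma polyOfS (i : 'I_m) : (@polyOf m.+1 a)`_(i.+1) = a i.
Proof.
rewrite polyOf_coef /= addr0.
have -> : (i.+1 == m.+1) = false by rewrite eqSS; apply/negbTE; rewrite neq_ltn ltn_ord.
rewrite add0r (big_pred1 i) // => k /=; rewrite eqSS; apply/eqP/eqP => [/val_inj|->] //.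
Qed.

Lemma polyOf_size : size (@polyOf m.+1 a) = m.+2.
Proof.
apply/eqP; rewrite eqn_leq; apply/andP; split.
  apply/leq_sizeP => j hj; rewrite polyOf_coef big_pred0; last first.
    move=> i /=; apply/negbTE; have := ltn_ord i; lia.
  have -> : (j == m.+1) = false by apply/negbTE; lia.
  have -> : (j == 0%N) = false by apply/negbTE; lia.
  by rewrite !addr0.
rewrite ltnNge; apply/negP => /(nth_default 0); rewrite -/((@polyOf m.+1 a)`_m.+1).
rewrite polyOf_coef big_pred0; last first.
  by move=> i /=; apply/negbTE; have := ltn_ord i; lia.
by rewrite eqxx !addr0 => /eqP; rewrite oner_eq0.
Qed.

Lemma polyOf_lead : lead_coef (@polyOf m.+1 a) = 1.
Proof.
rewrite lead_coefE polyOf_size /= polyOf_coef big_pred0; last first.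
  by move=> i /=; apply/negbTE; have := ltn_ord i; lia.
by rewrite eqxx addr0 addr0.
Qed.
End PolyOf.

Lemma inR1 m B (p : {poly int}) : p \in R1 m.+1 B ->
  exists f : {ffun 'I_m -> 'I_(2 * B).+1},
    p = @polyOf m.+1 (fun i => centered (f i)) /\ reducibleZ p.
Proof.
rewrite mem_filter => /andP[hr hp]; move: hp hr; rewrite /P1 mem_undup => /mapP [f _ ->].
exists f; split => //; move: hr; rewrite /reducibleZb.
by case: excluded_middle_informative.
Qed.

Lemma centered_inj B : injective (@centered B).
Proof.
move=> x y; rewrite /centered => /addIr /eqP; rewrite eqz_nat => /eqP h.
exact: val_inj.
Qed.

Unset Implicit Arguments.

Theorem theorem5p1 (d : nat) (hd : (2 <= d)%N) :
  (exists F : {mpoly algC[d.-1]},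
      F != 0 /\
      forall (B : nat) (p : {poly int}), p \in R1 d B ->
        F.@[fun i : 'I_(d.-1) => (p`_(i.+1))%:~R] = 0)
  /\
  (exists (C : rat) (B0 : nat), forall B : nat, (B0 <= B)%N -> (1 <= B)%N ->
      (size (R1 d B))%:R / (size (P1 d B))%:R <= C / B%:R).
Proof.
case: d hd => [|[|m']] // _.
split.
  exists (Fp m'.+1); split; first exact: Fp_neq0.
  move=> B p /inR1 [f [-> hred]].
  apply: Fp_van; [exact: polyOf_size | exact: polyOf_lead | exact: polyOf0 | by []].
exists ((m'.+1 * msize (Fp m'.+1))%N%:R), 1%N => B _ B1.
set s := (2 * B).+1.
pose g := fun k : 'I_s => ((centered k)%:~R : algC).
have g_inj : injective g by move=> x y /intr_inj /centered_inj.
have hSZ := SZ g_inj (Fp_neq0 m'.+1).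
pose G := fun f : {ffun 'I_m'.+1 -> 'I_s} => @polyOf m'.+2 (fun i => centered (f i)).
have G_inj : injective G.
  move=> f1 f2 e; apply/ffunP => i; apply: centered_inj.
  by have := congr1 (fun p : {poly int} => p`_(i.+1)) e; rewrite /G !polyOfS.
have hP : size (P1 m'.+2 B) = (s ^ m'.+1)%N.
  rewrite /P1 undup_id.
    by rewrite size_image card_ffun !card_ord.
  by rewrite map_inj_uniq ?enum_uniq.
have hR : (size (R1 m'.+2 B) <= #|Zset g (Fp m'.+1)|)%N.
  rewrite -(size_image G).
  apply: uniq_leq_size; first by rewrite filter_uniq // undup_uniq.
  move=> p /inR1 [f [pE hred]]; apply/imageP; exists f => //.
  rewrite inE; apply/eqP; rewrite -(@Fp_van m'.+1 p); last first.
  - by [].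
  - by rewrite pE polyOf0.
  - by rewrite pE polyOf_lead.
  - by rewrite pE polyOf_size.
  by apply: meval_eq => i; rewrite pE polyOfS.
have Bs : (B <= s)%N by rewrite /s; lia.
have key : (size (R1 m'.+2 B) * B <= m'.+1 * msize (Fp m'.+1) * s ^ m'.+1)%N.
  apply: leq_trans hSZ; apply: leq_mul => //.
rewrite hP ler_pdivrMr; last by rewrite ltr0n expn_gt0.
rewrite mulrAC ler_pdivlMr; last by rewrite ltr0n.
by rewrite -!natrM ler_nat.
Qed.
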